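(* Let $m \in \mathbb{N}$ and $k \geq 4$ be integers. If $|q - q_k| < q_k^{-(m+1)k-3}$, then there is a sequence $(c_j)_{j\ge1} \in \{0,1\}^\mathbb{N}$ such that $\sum_{j\ge1} c_j q^{-j} = 1$ and $(c_j)_{j\ge1} = (1^{k-1}0)^m (c_j)_{j \ge mk+1}$, i.e. its first $mk$ digits are $m$ consecutive copies of the word $1^{k-1}0$.
   Context: $q_k$ is the unique root in $(1,2)$ of $x^k - x^{k-1} - \cdots - x - 1 = 0$. $1^{k-1}0$ denotes the word of $k-1$ ones followed by a zero, and $(w)^m$ denotes $m$ concatenated copies of $w$. *)

(* Defs.v *)
From Stdlib Require Import Reals Lra Lia List.
From Coquelicot Require Import Coquelicot.
Open Scope R_scope.

(* x is a root in (1,2) of x^k - x^(k-1) - ... - x - 1 = 0.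
   (This root is unique; q_k denotes it.) *)
Definition is_qk (k : nat) (x : R) : Prop :=
  1 < x < 2 /\ x ^ k - sum_f_R0 (fun i => x ^ i) (k - 1) = 0.

Definition word_1k0 (k : nat) : list bool := repeat true (k - 1) ++ false :: nil.

Definition word_pow (w : list bool) (m : nat) : list bool := concat (repeat w m).

Definition b2R (b : bool) : R := if b then 1 else 0.

(* sum_{j>=1} c_j q^{-j} = v, with digits c_j indexed from j = 1 *)
Definition expansion_value (q : R) (c : nat -> bool) (v : R) : Prop :=
  is_series (fun n : nat => b2R (c (S n)) / q ^ (S n)) v.

(* Main.v *)
Require Import Defs.
From Stdlib Require Import Reals Lra Lia List.
From Coquelicot Require Import Coquelicot.
Open Scope R_scope.

Lemma powB (x y : R) (n : nat) : 0 <= y <= x -> 1 <= x ->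
  x ^ n - y ^ n <= INR n * x ^ n * (x - y).
Proof.
  intros Hy Hx. induction n as [|n IH]. simpl; lra.
  rewrite S_INR. simpl.
  assert (H1 : y ^ n <= x ^ n) by (apply pow_incr; lra).
  assert (H2 : x ^ n <= x * x ^ n) by (assert (0 <= x^n) by (apply pow_le; lra); nra).
  assert (0 <= y^n) by (apply pow_le; lra).
  assert (x * x ^ n - y * y ^ n = x * (x^n - y^n) + y^n * (x - y)) by ring.
  rewrite H0.
  assert (x * (x ^ n - y ^ n) <= x * (INR n * x ^ n * (x - y))) by (apply Rmult_le_compat_l; lra).
  assert (y^n * (x-y) <= x * x^n * (x-y)) by (apply Rmult_le_compat_r; lra).
  nra.
Qed.

Lemma pow_ge_n (x : R) (n : nat) : 17/10 <= x -> INR n <= x ^ n.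
Proof.
  intros Hx.
  assert (forall p, INR (p + 2) <= x ^ (p + 2)).
  { induction p as [|p IH].
    - simpl. nra.
    - replace (S p + 2)%nat with (S (p + 2)) by lia.
      rewrite S_INR. simpl. rewrite plus_INR in *. simpl in *.
      assert (0 <= INR p) by apply pos_INR. nra. }
  destruct n as [|[|n]]. simpl; lra. simpl; lra.
  replace (S (S n)) with (n + 2)%nat by lia. apply H.
Qed.

Lemma core (k N : nat) (a q : R) : (4<=k)%nat -> 18/10 <= a < 2 -> a^k*(2-a) = 1 ->
  Rabs (q-a) < / (a^(N+k+3)) ->
  1 < q < 2 /\
  0 <= 1 + (1 - q^k*(2-q))/(q-1) * ((q^N - 1)/(q^k-1)) <= 1/(q-1).
Proof.
  intros Hk Ha HK Hq.
  set (K := a^k) in *. set (E := / a^(N+k+3)) in *.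
  set (AN := a^N).
  assert (Hsplit : a^(N+k+3) = AN*K*a^3) by (unfold AN, K; rewrite !pow_add; ring).
  assert (Ha3 : 5832/1000 <= a^3) by (simpl; nra).
  assert (HK4 : a^4 <= K) by (apply Rle_pow; [lra|lia]).
  assert (Ha4 : 10 <= a^4) by (simpl; nra).
  assert (HkK : INR k <= K) by (apply pow_ge_n; lra).
  assert (Hk4 : 4 <= INR k) by (replace 4 with (INR 4) by (simpl; lra); apply le_INR; lia).
  assert (HAN : 1 <= AN) by (unfold AN; replace 1 with (1^N) by apply pow1; apply pow_incr; lra).
  assert (HP : 0 < AN*K*a^3) by (repeat apply Rmult_lt_0_compat; lra).
  assert (HE0 : 0 < E) by (unfold E; apply Rinv_0_lt_compat; rewrite Hsplit; lra).
  assert (HE1 : E * (AN*K*a^3) = 1) by (unfold E; rewrite <- Hsplit; field; rewrite Hsplit; lra).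
  assert (HEK : E * K * a^3 <= 1).
  { assert (0 <= E*K*a^3*(AN-1)) by (apply Rmult_le_pos; [|lra]; apply Rmult_le_pos; [|lra]; apply Rmult_le_pos; lra).
    nra. }
  assert (HEK2 : E * K <= 18/100) by nra.
  assert (HEs : E <= 2/100) by nra.
  apply Rabs_def2 in Hq. destruct Hq as [Hq1 Hq2].
  assert (Hq : 17/10 <= q < 2) by nra.
  split; [lra|].
  set (QK := q^k). set (QN := q^N).
  assert (HQK : INR k <= QK) by (apply pow_ge_n; lra).
  assert (HQN : 1 <= QN) by (unfold QN; replace 1 with (1^N) by apply pow1; apply pow_incr; lra).
  set (D := (1 - QK*(2-q))/(q-1)).
  set (G := (QN - 1)/(QK-1)).
  assert (HD : D*(q-1) = 1 - QK*(2-q)) by (unfold D; field; lra).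
  assert (HG : G*(QK-1) = QN - 1) by (unfold G; field; lra).
  assert (HG0 : 0 <= G) by (unfold G; apply Rdiv_le_0_compat; lra).
  assert (H2a : (2-a) * K = 1) by lra.
  destruct (Rle_or_lt a q) as [Hc|Hc].
  -
    assert (HKQ : K <= QK) by (apply pow_incr; lra).
    assert (HAQ : AN <= QN) by (apply pow_incr; lra).
    assert (HB : QK - K <= INR k * QK * (q - a)) by (apply powB; lra).
    assert (HB2 : q^(N+k) - a^(N+k) <= INR (N+k) * q^(N+k) * (q-a)) by (apply powB; lra).
    assert (HNk : INR (N+k) <= a^(N+k)) by (apply pow_ge_n; lra).
    replace (q^(N+k)) with (QN*QK) in HB2 by (unfold QN, QK; rewrite pow_add; ring).
    replace (a^(N+k)) with (AN*K) in HB2, HNk by (unfold AN, K; rewrite pow_add; ring).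
    assert (HNE : INR (N+k) * (q-a) <= 18/100).
    { assert (0 <= INR (N+k)) by apply pos_INR.
      assert (INR (N+k) * (q-a) <= INR (N+k) * E) by (apply Rmult_le_compat_l; lra).
      assert (INR (N+k) * E <= AN*K*E) by (apply Rmult_le_compat_r; lra).
      assert (AN*K*E <= 18/100) by nra.
      lra. }
    assert (HQQ : QN*QK*(82/100) <= AN*K).
    { assert (0 <= QN*QK) by (apply Rmult_le_pos; lra).
      assert (INR (N+k) * (q-a) * (QN*QK) <= 18/100 * (QN*QK)) by (apply Rmult_le_compat_r; lra).
      nra. }
    assert (HD0 : 0 <= D*(q-1)).
    { rewrite HD.
      assert (E1 : 1 - QK*(2-q) = (2-a)*(K-QK) + QK*(q-a)) by (rewrite <- H2a; ring).
      assert ((2-a)*(QK-K) <= (2-a)*(INR k * QK * (q - a))) by (apply Rmult_le_compat_l; lra).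
      assert ((2-a)*INR k <= 1) by nra.
      assert (0 <= QK*(q-a)) by (apply Rmult_le_pos; lra).
      assert ((2-a)*INR k*(QK*(q-a)) <= 1*(QK*(q-a))) by (apply Rmult_le_compat_r; lra).
      nra. }
    assert (HD1 : D*(q-1) <= QK*(q-a)) by nra.
    assert (0 <= D).
    { destruct (Rle_or_lt 0 D) as [|HH]; [auto|]. assert (D*(q-1) < 0) by (apply Rmult_neg_pos; lra). lra. }
    split. assert (0 <= D*G) by (apply Rmult_le_pos; lra). lra.
    apply (Rmult_le_reg_r (q-1)). lra.
    replace (1/(q-1)*(q-1)) with 1 by (field; lra).
    (* (1 + D G)(q-1) <= 1  <=>  D(q-1) G <= 2 - q *)
    assert (HDG : D*(q-1)*G*(QK-1) <= QK*(q-a)*(QN-1)) by nra.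
    assert (HDG2 : QK*(q-a)*(QN-1) <= QN*QK*E).
    { assert (0 <= QK*(q-a)) by (apply Rmult_le_pos; lra).
      assert (0 <= QN*QK) by (apply Rmult_le_pos; lra).
      assert (QN*QK*(q-a) <= QN*QK*E) by (apply Rmult_le_compat_l; lra).
      nra. }
    assert (HAKE : AN*K*E = 1/a^3).
    { assert (a^3 <> 0) by lra.
      apply (Rmult_eq_reg_r (a^3)); [|lra]. replace (1/a^3*a^3) with 1 by (field; lra). rewrite <- HE1; ring. }
    assert (HDG3 : QN*QK*E*(82/100) <= 1/a^3).
    { rewrite <- HAKE. assert (QN*QK*(82/100)*E <= AN*K*E) by (apply Rmult_le_compat_r; lra). lra. }
    assert (H2a1 : 2 - a <= 1/10) by nra.
    assert (HR1 : (2-q)*(K-1) <= (2 - q)*(QK-1)) by (apply Rmult_le_compat_l; lra).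
    assert (HR2 : (q-a)*(K-1) <= E*K).
    { assert ((q-a)*(K-1) <= (q-a)*K) by (apply Rmult_le_compat_l; lra).
      assert ((q-a)*K <= E*K) by (apply Rmult_le_compat_r; lra). lra. }
    assert (HR : (2 - q)*(QK-1) >= 7/10).
    { assert ((2-q)*(K-1) = (2-a)*K - (2-a) - (q-a)*(K-1)) by ring. lra. }
    assert (1/a^3 <= 18/100).
    { unfold Rdiv; rewrite Rmult_1_l; apply Rle_trans with (/ (5832/1000)); [apply Rinv_le_contravar; lra | lra]. }
    assert (HF : D*(q-1)*G*(QK-1) <= (2-q)*(QK-1)) by lra.
    assert (HF2 : D*(q-1)*G <= 2-q).
    { apply (Rmult_le_reg_r (QK-1)); lra. }
    nra.
  -
    assert (HKQ : QK <= K) by (apply pow_incr; lra).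
    assert (HAQ : QN <= AN) by (apply pow_incr; lra).
    assert (HB : K - QK <= INR k * K * (a - q)) by (apply powB; lra).
    assert (E1 : D*(q-1) = (2-a)*(K-QK) - QK*(a-q)) by (rewrite HD, <- H2a; ring).
    assert (HB' : (2-a)*(K-QK) <= (2-a)*(INR k * K * (a - q))) by (apply Rmult_le_compat_l; lra).
    assert (HB'' : (2-a)*(INR k * K * (a - q)) = INR k * (a-q)) by (replace (INR k * (a-q)) with (INR k * (a-q) * ((2-a)*K)) by (rewrite H2a; ring); ring).
    assert (HB3 : INR k * (a-q) <= QK * (a-q)) by (apply Rmult_le_compat_r; lra).
    assert (HD0 : D*(q-1) <= 0) by lra.
    assert (HD1 : - (QK*(a-q)) <= D*(q-1)).
    { assert (0 <= (2-a)*(K-QK)) by (apply Rmult_le_pos; lra). lra. }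
    assert (D <= 0).
    { destruct (Rle_or_lt D 0) as [|HH]; [auto|]. assert (0 < D*(q-1)) by (apply Rmult_lt_0_compat; lra). lra. }
    assert (HZ : D*G*((q-1)*(QK-1)) = D*(q-1)*(QN-1)) by (rewrite <- HG; ring).
    split.
    + assert (H1 : QK*(a-q)*(QN-1) <= K*AN*E).
      { assert (QK*(a-q) <= K*E).
        { assert (QK*(a-q) <= K*(a-q)) by (apply Rmult_le_compat_r; lra).
          assert (K*(a-q) <= K*E) by (apply Rmult_le_compat_l; lra). lra. }
        assert (0 <= QK*(a-q)) by (apply Rmult_le_pos; lra).
        assert (QK*(a-q)*(QN-1) <= K*E*(QN-1)) by (apply Rmult_le_compat_r; lra).
        assert (K*E*(QN-1) <= K*E*AN) by (apply Rmult_le_compat_l; [apply Rmult_le_pos|]; lra).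
        lra. }
      assert (H2 : -(QK*(a-q))*(QN-1) <= D*(q-1)*(QN-1)) by (apply Rmult_le_compat_r; lra).
      assert (H3 : K*AN*E*a^3 = 1) by (rewrite <- HE1; ring).
      assert (H4 : K*AN*E <= 18/100).
      { assert (0 <= K*AN*E) by (repeat apply Rmult_le_pos; lra). nra. }
      assert (H5 : 4 <= QK) by lra.
      assert (H6 : (q-1)*(QK-1) >= 2).
      { assert ((q-1)*3 <= (q-1)*(QK-1)) by (apply Rmult_le_compat_l; lra). lra. }
      destruct (Rle_or_lt 0 (1 + D*G)) as [|HH]; [auto|].
      assert (D*G*((q-1)*(QK-1)) < -1*((q-1)*(QK-1))) by (apply Rmult_lt_compat_r; lra).
      lra.
    + assert (D*G <= 0).
      { assert (0 <= -D * G) by (apply Rmult_le_pos; lra). lra. }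
      apply (Rmult_le_reg_r (q-1)). lra.
      replace (1/(q-1)*(q-1)) with 1 by (field; lra).
      replace ((1 + D*G)*(q-1)) with ((q-1) + D*G*(q-1)) by ring.
      assert (D*G*(q-1) <= 0).
      { assert (0 <= -(D*G)*(q-1)) by (apply Rmult_le_pos; lra). lra. }
      lra.
Qed.
Lemma f4 (a : R) : 1 < a < 18/10 -> a^4 - a^3 - a^2 - a - 1 < 0.
Proof. intros H.
  assert (H3 : a^3 <= (18/10)^3) by (apply pow_incr; lra).
  assert (H4 : a^3*(a-1) <= (18/10)^3*(a-1)) by (apply Rmult_le_compat_r; lra).
  replace (a^4) with (a^3*(a-1) + a^3) by (simpl; ring).
  assert (0 <= (a - 2416/1000)^2) by (apply pow2_ge_0).
  simpl in *. nra.
Qed.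
Lemma qk_facts k a : (4 <= k)%nat -> is_qk k a -> a^k*(2-a) = 1 /\ 18/10 <= a < 2.
Proof.
  intros Hk [Ha Hs].
  rewrite tech3 in Hs by lra.
  replace (S (k-1)) with k in Hs by lia.
  assert (HK : a^k*(2-a) = 1).
  { assert (1 - a <> 0) by lra.
    apply Rminus_diag_uniq in Hs.
    assert (a^k*(1-a) = 1 - a^k) by (rewrite Hs at 1; field; auto). lra. }
  split; [auto|]. split; [|lra].
  destruct (Rle_or_lt (18/10) a) as [|Hlt]; [auto|].
  exfalso.
  assert (H4 : a^4 <= a^k) by (apply Rle_pow; [lra|lia]).
  assert (a^4*(2-a) <= 1) by (rewrite <- HK; apply Rmult_le_compat_r; lra).
  assert (Hf := f4 a (conj (proj1 Ha) Hlt)).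
  assert (a^4*(2-a) - 1 = (a-1)*(-(a^4 - a^3 - a^2 - a - 1))) by (simpl; ring).
  assert (0 < (a-1)*(-(a^4 - a^3 - a^2 - a - 1))) by (apply Rmult_lt_0_compat; lra).
  lra.
Qed.

Lemma mod_lem (t k i : nat) : (i < k)%nat -> ((t*k + i) mod k = i)%nat.
Proof. intros H. rewrite Nat.add_comm, Nat.Div0.mod_add. apply Nat.mod_small; auto. Qed.

Lemma word_nth (k m j : nat) : (1 <= k)%nat -> (j < m*k)%nat ->
  nth j (word_pow (word_1k0 k) m) false = Nat.ltb (j mod k) (k-1).
Proof.
  intros Hk. revert j. induction m as [|m IH]; intros j Hj; [lia|].
  unfold word_pow. simpl. fold (word_pow (word_1k0 k) m).
  assert (Hl : length (word_1k0 k) = k) by (unfold word_1k0; rewrite length_app, repeat_length; simpl; lia).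
  destruct (Nat.lt_ge_cases j k) as [Hjk|Hjk].
  - rewrite app_nth1 by lia. rewrite Nat.mod_small by auto.
    unfold word_1k0. destruct (Nat.lt_ge_cases j (k-1)) as [H1|H1].
    + rewrite app_nth1 by (rewrite repeat_length; lia). rewrite nth_repeat_lt by lia.
      symmetry. apply Nat.ltb_lt. auto.
    + rewrite app_nth2 by (rewrite repeat_length; lia). rewrite repeat_length.
      replace (j - (k-1))%nat with 0%nat by lia. simpl. symmetry. apply Nat.ltb_ge. auto.
  - rewrite app_nth2 by lia. rewrite Hl. rewrite IH by lia.
    f_equal. replace j with ((j - k) + 1*k)%nat at 2 by lia. rewrite Nat.Div0.mod_add. auto.
Qed.

Definition dig (q : R) (N k n : nat) (y : R) : bool :=
  if Nat.ltb n N then Nat.ltb (n mod k) (k-1)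
  else if Rle_dec 1 (q*y) then true else false.

Fixpoint xs (q : R) (N k n : nat) : R :=
  match n with
  | O => 1
  | S n' => q * xs q N k n' - b2R (dig q N k n' (xs q N k n'))
  end.

Lemma block (q : R) (m k t i : nat) : (1 <= k)%nat -> q <> 1 -> (t < m)%nat -> (i <= k-1)%nat ->
  xs q (m*k) k (t*k+i) = q^i * xs q (m*k) k (t*k) - (q^i - 1)/(q-1).
Proof.
  intros Hk Hq Ht. induction i as [|i IH]; intros Hi.
  - rewrite Nat.add_0_r. simpl. field. lra.
  - rewrite Nat.add_succ_r. simpl xs.
    rewrite IH by lia.
    unfold dig. replace (Nat.ltb (t*k+i) (m*k)) with true by (symmetry; apply Nat.ltb_lt; nia).
    rewrite mod_lem by lia. replace (Nat.ltb i (k-1)) with true by (symmetry; apply Nat.ltb_lt; lia).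
    simpl b2R. simpl pow. field. lra.
Qed.

Lemma block_end (q : R) (m k t : nat) : (1 <= k)%nat -> q <> 1 -> (t < m)%nat ->
  xs q (m*k) k (S t * k) = q^k * xs q (m*k) k (t*k) - (q^k - q)/(q-1).
Proof.
  intros Hk Hq Ht.
  replace (S t * k)%nat with (S (t*k + (k-1))) by nia.
  simpl xs. rewrite block by (auto || lia).
  unfold dig. replace (Nat.ltb (t*k+(k-1)) (m*k)) with true by (symmetry; apply Nat.ltb_lt; nia).
  rewrite mod_lem by lia. rewrite Nat.ltb_irrefl. simpl b2R.
  assert (Hp : q^k = q * q^(k-1)) by (replace k with (S (k-1)) at 1 by lia; reflexivity).
  rewrite Hp. field. lra.
Qed.

Lemma blocks (q : R) (m k t : nat) : (1 <= k)%nat -> q <> 1 -> q^k <> 1 -> (t <= m)%nat ->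
  xs q (m*k) k (t*k) = 1 + (1 - q^k*(2-q))/(q-1) * ((q^(t*k) - 1)/(q^k-1)).
Proof.
  intros Hk Hq HQ. induction t as [|t IH]; intros Ht.
  - simpl. field. split; lra.
  - rewrite block_end by (auto || lia). rewrite IH by lia.
    replace (S t * k)%nat with (t*k + k)%nat by lia. rewrite pow_add.
    field. split; lra.
Qed.

Lemma invariant (q : R) (N k : nat) : 1 < q < 2 ->
  0 <= xs q N k N <= 1/(q-1) ->
  forall d, 0 <= xs q N k (N + d) <= 1/(q-1).
Proof.
  intros Hq H0 d. induction d as [|d IH].
  - rewrite Nat.add_0_r; auto.
  - rewrite Nat.add_succ_r. simpl xs. unfold dig.
    replace (Nat.ltb (N+d) N) with false by (symmetry; apply Nat.ltb_ge; lia).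
    set (y := xs q N k (N+d)) in *.
    assert (Hinv : 1/(q-1) * (q-1) = 1) by (field; lra).
    destruct (Rle_dec 1 (q*y)) as [H|H]; simpl b2R.
    + split. lra.
      apply (Rmult_le_reg_r (q-1)). lra. rewrite Hinv.
      assert (q*y*(q-1) <= q*(1/(q-1))*(q-1)) by (apply Rmult_le_compat_r; [lra|]; apply Rmult_le_compat_l; lra).
      replace (q*(1/(q-1))*(q-1)) with q in H0 by (field; lra).
      assert (q * (1 / (q - 1)) * (q - 1) = q) by (field; lra). nra.
    + split. assert (0 <= q*y) by (apply Rmult_le_pos; lra). lra.
      assert (1 <= 1/(q-1)).
      { apply (Rmult_le_reg_r (q-1)). lra. rewrite Hinv. lra. }
      lra.
Qed.

Lemma partial (q : R) (N k : nat) : q <> 0 ->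
  forall n, @eq R (sum_n (fun n => b2R (dig q N k n (xs q N k n)) / q^(S n)) n)
            (1 - xs q N k (S n) / q^(S n)).
Proof.
  intros Hq n. induction n as [|n IH].
  - rewrite sum_n_Reals. simpl. field. auto.
  - rewrite sum_n_Reals in *. change (sum_f_R0 ?f (S n)) with (sum_f_R0 f n + f (S n)).
    rewrite IH.
    cbn [xs]. set (X := xs q N k (S n)). set (b := b2R (dig q N k (S n) X)).
    assert (q^(S n) <> 0) by (apply pow_nonzero; auto).
    replace (q^(S (S n))) with (q * q^(S n)) by reflexivity.
    field; auto.
Qed.


Theorem lemma3p4 (m k : nat) (qk q : R) :
  (4 <= k)%nat ->
  is_qk k qk ->
  Rabs (q - qk) < / qk ^ ((m + 1) * k + 3) ->
  exists c : nat -> bool,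
    expansion_value q c 1 /\
    (forall j : nat, (j < m * k)%nat ->
       c (S j) = nth j (word_pow (word_1k0 k) m) false).
Proof.
  intros Hk Hqk Hq.
  destruct (qk_facts k qk Hk Hqk) as [HK Ha].
  replace ((m+1)*k+3)%nat with (m*k+k+3)%nat in Hq by lia.
  destruct (core k (m*k) qk q Hk Ha HK Hq) as [Hq12 HX].
  set (N := (m*k)%nat) in *.
  assert (HqK : q^k <> 1).
  { assert (q^1 < q^k). { apply Rlt_pow; [lra|lia]. } simpl in H. lra. }
  assert (HXN : xs q N k N = 1 + (1 - q^k*(2-q))/(q-1) * ((q^N - 1)/(q^k-1))).
  { unfold N. apply blocks; [lia|lra|auto|lia]. }
  rewrite <- HXN in HX.
  pose proof (invariant q N k Hq12 HX) as Hinv.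
  exists (fun j => match j with O => false | S n => dig q N k n (xs q N k n) end).
  split.
  - unfold expansion_value.
    assert (Hlim : is_lim_seq (sum_n (fun n => b2R (dig q N k n (xs q N k n)) / q^(S n))) 1).
    { apply is_lim_seq_ext with (u := fun n => 1 - xs q N k (S n) / q^(S n)).
      { intros n. rewrite partial; [reflexivity|lra]. }
      replace (Finite 1) with (Finite (1 - 0)) by (f_equal; ring).
      apply is_lim_seq_minus'. apply is_lim_seq_const.
      apply (is_lim_seq_incr_n _ N).
      set (C := 1/(q-1)).
      apply is_lim_seq_le_le with (u := fun _ => 0) (w := fun n => C * (/q)^(n + S N)).
      - intros n. replace (S (n + N)) with (N + S n)%nat by lia.
        destruct (Hinv (S n)) as [H1 H2].
        assert (Hp : 0 < q^(N + S n)) by (apply pow_lt; lra).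
        replace (n + S N)%nat with (N + S n)%nat by lia.
        rewrite pow_inv. split.
        + apply Rdiv_le_0_compat; lra.
        + unfold Rdiv. apply Rmult_le_compat_r; [|unfold C; lra]. left; apply Rinv_0_lt_compat; lra.
      - apply is_lim_seq_const.
      - apply (is_lim_seq_incr_n (fun n => C * (/q)^n) (S N)).
        replace (Finite 0) with (Rbar_mult C 0) by (simpl; f_equal; ring).
        apply is_lim_seq_scal_l. apply is_lim_seq_geom.
        rewrite Rabs_pos_eq. apply (Rmult_lt_reg_l q). lra. rewrite Rinv_r; lra.
        left; apply Rinv_0_lt_compat; lra. }
    exact Hlim.
  - intros j Hj. simpl. unfold dig.
    replace (Nat.ltb j N) with true by (symmetry; apply Nat.ltb_lt; unfold N; lia).
    symmetry. apply word_nth; [lia|auto].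
Qed.
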